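(* Let $(\Omega,\mathcal{F})$ be a measurable space, $\mathcal{P}$ a nonempty set of probability measures on it, $\hat{\mathbb{E}}[Z]=\sup_{P\in\mathcal{P}}E_P[Z]$, and let $X,Y,Z$ be random variables with $\hat{\mathbb{E}}[X^2]+\hat{\mathbb{E}}[Y^2]+\hat{\mathbb{E}}[Z^2]<\infty$. Then: (1) $\overline{C}(X,Y)=\overline{C}(Y,X)$ and $\underline{C}(X,Y)=\underline{C}(Y,X)$; (2) for all $a,b\in\mathbb{R}$, $\overline{C}(X+a,Y+b)=\overline{C}(X,Y)$ and $\underline{C}(X+a,Y+b)=\underline{C}(X,Y)$; (3) $\overline{C}(X+Y,Z)\le\overline{C}(X,Z)+\overline{C}(Y,Z)$; (4) $\underline{C}(X+Y,Z)\ge\underline{C}(X,Z)+\underline{C}(Y,Z)$; (5) for all $a,b\in\mathbb{R}$ with $ab\ge0$, $\overline{C}(aX,bY)=ab\,\overline{C}(X,Y)$ and $\underline{C}(aX,bY)=ab\,\underline{C}(X,Y)$; (6) for all $a,b\in\mathbb{R}$ with $ab\le 0$, $\overline{C}(aX,bY)=ab\,\underline{C}(X,Y)$; in particular $\underline{C}(X,Y)=-\overline{C}(-X,Y)=-\overline{C}(X,-Y)$.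
   Context: For a random variable $W$ with $\hat{\mathbb{E}}[W^2]<\infty$: $\overline{\mu}_W=\hat{\mathbb{E}}[W]$, $\underline{\mu}_W=-\hat{\mathbb{E}}[-W]$, $M_W=[\underline{\mu}_W,\overline{\mu}_W]$. Upper covariance: $\overline{C}(X,Y)=\max_{\mu_2\in M_Y}\min_{\mu_1\in M_X}\hat{\mathbb{E}}[(X-\mu_1)(Y-\mu_2)]$; lower covariance: $\underline{C}(X,Y)=\min_{\mu_2\in M_Y}\max_{\mu_1\in M_X}\left(-\hat{\mathbb{E}}[-(X-\mu_1)(Y-\mu_2)]\right)$. *)

(* Defs.v *)
From mathcomp Require Import all_boot all_order all_algebra.
From mathcomp Require Import all_classical all_reals all_analysis.
Set Implicit Arguments. Unset Strict Implicit. Unset Printing Implicit Defensive.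
Import Order.TTheory GRing.Theory Num.Theory.
Local Open Scope classical_set_scope.
Local Open Scope ring_scope.

Section SublinearCov.
Context {d : measure_display} {T : measurableType d} {R : realType}.
Variable PP : set (probability T R).

Definition Ehat (W : T -> R) : \bar R :=
  ereal_sup [set (\int[P]_x (W x)%:E)%E | P in PP].

Definition mu_up (W : T -> R) : \bar R := Ehat W.
Definition mu_lo (W : T -> R) : \bar R := (- Ehat (fun w => (- W w)%R))%E.

Definition Mint (W : T -> R) : set R :=
  [set m : R | (mu_lo W <= m%:E)%E /\ (m%:E <= mu_up W)%E].

Definition cov_up (X Y : T -> R) : \bar R :=
  ereal_sup [set ereal_inf [set Ehat (fun w => (X w - m1) * (Y w - m2))
                             | m1 in Mint X] | m2 in Mint Y].

Definition cov_lo (X Y : T -> R) : \bar R :=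
  ereal_inf [set ereal_sup [set (- Ehat (fun w => (- ((X w - m1) * (Y w - m2)))%R))%E
                             | m1 in Mint X] | m2 in Mint Y].
End SublinearCov.

(* Main.v *)
From mathcomp Require Import all_boot all_order all_algebra.
From mathcomp Require Import all_classical all_reals all_analysis.
From mathcomp Require Import ring lra.
Require Import Defs.
Set Implicit Arguments. Unset Strict Implicit. Unset Printing Implicit Defensive.
Import Order.TTheory GRing.Theory Num.Theory.
Local Open Scope classical_set_scope.
Local Open Scope ring_scope.

Section Core.
Variables (R : realType) (I : Type) (S : set I) (x y s : I -> R).

Definition hF (m1 m2 : R) i := s i - m1 * y i - m2 * x i + m1 * m2.
Definition Fc m1 m2 := ereal_sup [set (hF m1 m2 i)%:E | i in S].
Definition supc (v : I -> R) := ereal_sup [set (v i)%:E | i in S].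
Definition infc (v : I -> R) := (- ereal_sup [set (- v i)%:E | i in S])%E.
Definition Mc v := [set m : R | (infc v <= m%:E)%E /\ (m%:E <= supc v)%E].
Definition Vc := ereal_sup [set ereal_inf [set Fc m1 m2 | m1 in Mc x] | m2 in Mc y].
Definition Phi (t : I * I * R) :=
  t.2 * s t.1.1 + (1 - t.2) * s t.1.2
  - (t.2 * x t.1.1 + (1 - t.2) * x t.1.2) * (t.2 * y t.1.1 + (1 - t.2) * y t.1.2).
Definition Tc := [set t : I * I * R | S t.1.1 /\ S t.1.2 /\ 0 <= t.2 <= 1].
Definition Wc := ereal_sup [set (Phi t)%:E | t in Tc].

Lemma conv_le (u w l : R) (E : \bar R) : (u%:E <= E)%E -> (w%:E <= E)%E ->
  0 <= l <= 1 -> ((l * u + (1 - l) * w)%:E <= E)%E.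
Proof.
move=> uE wE /andP[l0 l1].
have [uw|wu] := lerP u w.
  by apply: le_trans wE; rewrite lee_fin; nra.
by apply: le_trans uE; rewrite lee_fin; nra.
Qed.

Lemma supc_real (v : I -> R) (M : R) : S !=set0 -> (forall i, S i -> v i <= M) ->
  exists r, supc v = r%:E /\ forall i, S i -> v i <= r.
Proof.
move=> [i0 Si0] vM.
have h1 : (supc v <= M%:E)%E.
  by apply: ge_ereal_sup => _ [i Si <-]; rewrite lee_fin vM.
have h2 : ((v i0)%:E <= supc v)%E by apply: ereal_sup_ubound; exists i0.
have fs : supc v \is a fin_num.
  by rewrite fin_numE; apply/andP; split; apply/eqP => h; move: h1 h2; rewrite h.
exists (fine (supc v)); split; first by rewrite fineK.
move=> i Si; rewrite -lee_fin fineK //; apply: ereal_sup_ubound; by exists i.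
Qed.

Lemma Phi_diag i : Phi (i, i, 1) = s i - x i * y i.
Proof. rewrite /Phi /=; ring. Qed.

Lemma Wc_ge t : Tc t -> ((Phi t)%:E <= Wc)%E.
Proof. by move=> Tt; apply: ereal_sup_ubound; exists t. Qed.

Lemma W_le_V : (Wc <= Vc)%E.
Proof.
apply: ge_ereal_sup => _ [[[i j] l] [/= Si [Sj /andP[l0 l1]]] <-].
pose m2 := l * y i + (1 - l) * y j.
have l01 : 0 <= l <= 1 by rewrite l0 l1.
apply: le_ereal_sup_tmp; exists (ereal_inf [set Fc m1 m2 | m1 in Mc x]).
  exists m2 => //; split.
  rewrite /infc leeNl -EFinN.
  have -> : - m2 = l * (- y i) + (1 - l) * (- y j) by rewrite /m2; ring.
  by apply: conv_le => //; apply: ereal_sup_ubound; [exists i|exists j].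
 by apply: conv_le => //; apply: ereal_sup_ubound; [exists i|exists j].
apply: le_ereal_inf_tmp => _ [m1 _ <-].
have -> : Phi (i, j, l) = l * hF m1 m2 i + (1 - l) * hF m1 m2 j.
  by rewrite /Phi /hF /m2 /=; ring.
by apply: conv_le => //; apply: ereal_sup_ubound; [exists i|exists j].
Qed.

Lemma V_le_W (M : R) : S !=set0 -> (forall i, S i -> x i <= M /\ - x i <= M) ->
  (Vc <= Wc)%E.
Proof.
move=> [i0 Si0] xM.
have [bx [sbx xbx]] := @supc_real x M (ex_intro _ i0 Si0) (fun i Si => (xM i Si).1).
have [nx [snx xnx]] := @supc_real (fun i => - x i) M (ex_intro _ i0 Si0)
   (fun i Si => (xM i Si).2).
apply: ge_ereal_sup => _ [m2 _ <-].
have Wd : ((Phi (i0, i0, 1))%:E <= Wc)%E by apply: Wc_ge; split => //=; split => //; rewrite ler01 lexx.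
case EW : Wc Wd => [w| |]; first (move=> _); last 2 first.
- by move=> _; rewrite leey.
- by rewrite leeNy_eq.
have Hphi : forall t, Tc t -> Phi t <= w.
  by move=> t Tt; rewrite -lee_fin -EW; apply: Wc_ge.
have Hdiag : forall i, S i -> s i - x i * y i <= w.
  by move=> i Si; rewrite -Phi_diag; apply: Hphi; split => //=; split => //; rewrite ler01 lexx.
pose al i := s i - m2 * x i.
pose be i := y i - m2.
pose A := [set z : R | (exists i, [/\ S i, 0 < be i & z = (al i - w) / be i]) \/
                     (forall i, S i -> z <= x i)].
pose B := [set z : R | (exists i, [/\ S i, be i < 0 & z = (al i - w) / be i]) \/
                     (forall i, S i -> x i <= z)].
have AB : forall a b, A a -> B b -> a <= b.
  move=> a b [[i [Si bi ->]]|Ha] [[j [Sj bj ->]]|Hb].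
  - set L := (al i - w) / be i; set U := (al j - w) / be j.
    have eL : al i - w = L * be i by rewrite /L mulrVK // unitfE gt_eqF.
    have eU : al j - w = U * be j by rewrite /U mulrVK // unitfE lt_eqF.
    pose p := be i; pose q := - be j.
    have p0 : 0 < p by [].
    have q0 : 0 < q by rewrite /q oppr_gt0.
    pose l := q / (p + q).
    have pq0 : 0 < p + q by rewrite addr_gt0.
    have l01 : 0 <= l <= 1.
      apply/andP; split; first by rewrite /l divr_ge0 // ltW.
      by rewrite /l ler_pdivrMr // mul1r lerDr ltW.
    have := Hphi (i, j, l) (conj Si (conj Sj l01)).
    have ey : l * y i + (1 - l) * y j = m2.
      have : l * be i + (1 - l) * be j = 0.
        rewrite -/p (_ : be j = - q); last by rewrite /q opprK.
        rewrite /l; field; by rewrite gt_eqF.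
      rewrite /be => h; apply/eqP; rewrite -subr_eq0 -h; apply/eqP; ring.
    rewrite /Phi /= ey.
    have -> : l * s i + (1 - l) * s j - (l * x i + (1 - l) * x j) * m2 =
       l * (al i - w) + (1 - l) * (al j - w) + w by rewrite /al; ring.
    rewrite eL eU -/p (_ : be j = - q); last by rewrite /q opprK.
    rewrite /l => h.
    have h2 : (q / (p + q) * (L * p) + (1 - q / (p + q)) * (U * - q)) * (p + q) <= 0.
      by apply: mulr_le0_ge0; [lra | exact: ltW].
    have h3 : (q / (p + q) * (L * p) + (1 - q / (p + q)) * (U * - q)) * (p + q) = p * q * (L - U).
      by field; rewrite gt_eqF.
    rewrite h3 in h2.
    have pq : 0 < p * q by rewrite mulr_gt0.
    by rewrite -subr_le0; rewrite pmulr_rle0 in h2.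
  - rewrite ler_pdivrMr //.
    have := Hdiag i Si; have := Hb i Si; move: bi; rewrite /al /be => bi h1 h2.
    have : 0 <= (b - x i) * (y i - m2) by apply: mulr_ge0; lra.
    lra.
  - have bj' : 0 < - be j by rewrite oppr_gt0.
    set U := (al j - w) / be j.
    have eU : al j - w = U * be j by rewrite /U mulrVK // unitfE lt_eqF.
    have := Hdiag j Sj; have := Ha j Sj; move: eU bj'; rewrite /al /be => eU bj' h1 h2.
    have : 0 <= (x j - a) * (m2 - y j) by apply: mulr_ge0; lra.
    move=> h3.
    have : 0 <= (U - a) * (m2 - y j) by lra.
    rewrite pmulr_lge0; [lra | lra].
  - by apply: le_trans (Ha i0 Si0) (Hb i0 Si0).
have Ane : A (- nx) by right => i Si; rewrite lerNl; apply: xnx.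
have Bbx : B bx by right => i Si; apply: xbx.
have hsA : has_sup A by split; [exists (- nx) | exists bx => a Aa; apply: AB].
pose m1 := sup A.
have Am1 : forall a, A a -> a <= m1 by move=> a Aa; apply: sup_upper_bound.
have m1B : forall b, B b -> m1 <= b by move=> b Bb; apply: ge_sup; [exists (- nx) | move=> a Aa; apply: AB].
apply: ge_ereal_inf; exists (Fc m1 m2).
  exists m1 => //; split.
    by rewrite /infc /supc in snx *; rewrite snx -EFinN lee_fin; apply: Am1.
  by rewrite /supc in sbx *; rewrite sbx lee_fin; apply: m1B.
apply: ge_ereal_sup => _ [i Si <-]; rewrite lee_fin.
have -> : hF m1 m2 i = al i - m1 * be i by rewrite /hF /al /be; ring.
have [bn|bp|bz] := ltgtP (be i) 0.
- have := m1B _ (or_introl (ex_intro _ i (And3 Si bn erefl))).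
  rewrite ler_ndivlMr //; lra.
- have := Am1 _ (or_introl (ex_intro _ i (And3 Si bp erefl))).
  rewrite ler_pdivrMr //; lra.
- rewrite bz mulr0 subr0.
  have := Hdiag i Si; move: bz; rewrite /al /be => bz.
  have -> : y i = m2 by apply/eqP; rewrite -subr_eq0 bz.
  by rewrite mulrC.
Qed.
End Core.

Lemma Vc_eq (R : realType) (I : Type) (S : set I) (x y s : I -> R) (M : R) :
  S !=set0 -> (forall i, S i -> x i <= M /\ - x i <= M) -> Vc S x y s = Wc S x y s.
Proof.
by move=> Sn xM; apply/eqP; rewrite eq_le (V_le_W _ _ Sn xM) W_le_V.
Qed.

Lemma Wc_sym (R : realType) (I : Type) (S : set I) (x y s : I -> R) :
  Wc S x y s = Wc S y x s.
Proof.
rewrite /Wc; congr ereal_sup; apply: eq_imagel => t _; congr EFin; rewrite /Phi; ring.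
Qed.

Lemma Wc_shift (R : realType) (I : Type) (S : set I) (x y s : I -> R) (a b : R) :
  Wc S (fun i => x i + a) (fun i => y i + b) (fun i => s i + a * y i + b * x i + a * b)
  = Wc S x y s.
Proof.
rewrite /Wc; congr ereal_sup; apply: eq_imagel => t _; congr EFin; rewrite /Phi; ring.
Qed.

Lemma Tc_ne (R : realType) (I : Type) (S : set I) : S !=set0 -> (@Tc R I S) !=set0.
Proof. by move=> [i Si]; exists (i, i, 1); split => //=; split => //; rewrite ler01 lexx. Qed.

Lemma Wc_ninf (R : realType) (I : Type) (S : set I) (x y s : I -> R) :
  S !=set0 -> (-oo < Wc S x y s)%E.
Proof.
move=> /(@Tc_ne R) [t Tt]; apply: (@lt_le_trans _ _ (Phi x y s t)%:E); first by rewrite ltNyr.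
by apply: Wc_ge.
Qed.

Lemma Wc_add (R : realType) (I : Type) (S : set I) (x1 x2 y s1 s2 : I -> R) :
  (Wc S (fun i => (x1 i + x2 i)%R) y (fun i => (s1 i + s2 i)%R) <= Wc S x1 y s1 + Wc S x2 y s2)%E.
Proof.
apply: ge_ereal_sup => _ [t Tt <-].
have -> : Phi (fun i => x1 i + x2 i) y (fun i => s1 i + s2 i) t =
  Phi x1 y s1 t + Phi x2 y s2 t by rewrite /Phi; ring.
by rewrite EFinD; apply: leeD; apply: Wc_ge.
Qed.

Lemma Wc_scale (R : realType) (I : Type) (S : set I) (x y s : I -> R) (a b : R) :
  S !=set0 -> 0 <= a * b ->
  Wc S (fun i => a * x i) (fun i => b * y i) (fun i => a * b * s i) = ((a * b)%:E * Wc S x y s)%E.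
Proof.
move=> Sn ab; rewrite /Wc -ereal_supZl //; last first.
  by apply/set0P; have [t Tt] := Tc_ne R Sn; exists (Phi x y s t)%:E; exists t.
rewrite !image_comp; congr ereal_sup; apply: eq_imagel => t _ /=.
rewrite -EFinM; congr EFin; rewrite /Phi; ring.
Qed.
Section Meas.
Context {d : measure_display} {T : measurableType d} {R : realType}.
Variable PP : set (probability T R).

Definition okf (g : T -> R) := measurable_fun setT g /\
  forall P, PP P -> P.-integrable setT (EFin \o g).
Definition eP (P : probability T R) (g : T -> R) := fine (\int[P]_x (g x)%:E).

Lemma ieE g P : okf g -> PP P -> (\int[P]_x (g x)%:E)%E = (eP P g)%:E.
Proof. by move=> [_ ig] PPP; rewrite /eP fineK //; apply: integrable_fin_num => //; exact: ig. Qed.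

Lemma okD f g : okf f -> okf g -> okf (fun w => f w + g w).
Proof.
move=> [mf If] [mg Ig]; split; first exact: measurable_realfun.measurable_funD.
move=> P PPP; have := integrableD measurableT (If P PPP) (Ig P PPP).
by apply: (eq_integrable measurableT) => w _ /=; rewrite EFinD.
Qed.

Lemma okZ k f : okf f -> okf (fun w => k * f w).
Proof.
move=> [mf If]; split; first exact: (measurable_realfun.measurable_funM (measurable_cst k) mf).
move=> P PPP; have := integrableZl measurableT k (If P PPP).
by apply: (eq_integrable measurableT) => w _ /=; rewrite EFinM.
Qed.

Lemma okC k : okf (fun _ => k).
Proof.
split; first exact: measurable_cst.
by move=> P _; apply: finite_measure_integrable_cst.
Qed.

Lemma eP_D f g P : okf f -> okf g -> PP P ->
  eP P (fun w => f w + g w) = eP P f + eP P g.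
Proof.
move=> [mf If] [mg Ig] PPP; rewrite /eP.
under eq_integral do rewrite EFinD.
rewrite (integralD measurableT (If P PPP) (Ig P PPP)).
by rewrite fineD //; apply: integrable_fin_num => //; [apply: If | apply: Ig].
Qed.

Lemma eP_Z k f P : okf f -> PP P -> eP P (fun w => k * f w) = k * eP P f.
Proof.
move=> [mf If] PPP; rewrite /eP.
under eq_integral do rewrite EFinM.
rewrite (integralZl measurableT (If P PPP)).
by rewrite fineM //; apply: integrable_fin_num => //; apply: If.
Qed.

Lemma eP_C k P : eP P (fun _ => k) = k.
Proof.
rewrite /eP; have := integral_cst P measurableT k%:E; rewrite /cst => ->.
rewrite (_ : _ [set: T] = 1%E); first by rewrite mule1.
exact: probability_setT.
Qed.

Lemma eP_le f g P : okf f -> okf g -> PP P -> (forall w, f w <= g w) -> eP P f <= eP P g.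
Proof.
move=> Hf Hg PPP fg; rewrite -lee_fin -!ieE //.
by apply: le_integral => //; [apply: Hf.2 | apply: Hg.2 | move=> w _; rewrite lee_fin].
Qed.

End Meas.

Section Bridge.
Context {d : measure_display} {T : measurableType d} {R : realType}.
Variable PP : set (probability T R).

Lemma ok_dom (f g : T -> R) : measurable_fun setT f -> okf PP g ->
  (forall w, `|f w| <= g w) -> okf PP f.
Proof.
move=> mf [mg Ig] fg; split => // P PPP.
apply: (le_integrable measurableT _ _ (Ig P PPP)).
  exact/measurable_realfun.measurable_EFinP.
move=> w _; change ((`|(f w)%:E| <= `|(g w)%:E|)%E); rewrite !abse_EFin lee_fin (le_trans (fg w)) //; exact: ler_norm.
Qed.

Definition Hyp (U : T -> R) := [/\ okf PP U, okf PP (fun w => U w ^+ 2) &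
  exists K, forall P : probability T R, PP P -> eP P (fun w => U w ^+ 2) <= K].

Lemma norm_mul_le (u v : R) : `|u * v| <= u ^+ 2 + v ^+ 2.
Proof.
rewrite ler_norml; apply/andP; split.
  have : 0 <= (u + v) ^+ 2 by apply: sqr_ge0.
  rewrite !expr2; nra.
have : 0 <= (u - v) ^+ 2 by apply: sqr_ge0.
rewrite !expr2; nra.
Qed.

Lemma okM U V : Hyp U -> Hyp V -> okf PP (fun w => U w * V w).
Proof.
move=> [oU oU2 _] [oV oV2 _].
apply: (ok_dom _ (okD oU2 oV2)); last by move=> w; apply: norm_mul_le.
exact: (measurable_realfun.measurable_funM oU.1 oV.1).
Qed.

Lemma Hyp_ext U V : (forall w, U w = V w) -> Hyp U -> Hyp V.
Proof. by move=> e; rewrite (_ : U = V) //; apply/funext. Qed.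

Lemma eP_ext (P : probability T R) (U V : T -> R) : (forall w, U w = V w) -> eP P U = eP P V.
Proof. by move=> e; rewrite (_ : U = V) //; apply/funext. Qed.

Lemma okf_ext U V : (forall w, U w = V w) -> okf PP U -> okf PP V.
Proof. by move=> e; rewrite (_ : U = V) //; apply/funext. Qed.

Lemma HypD U V : Hyp U -> Hyp V -> Hyp (fun w => U w + V w).
Proof.
move=> hU hV; have oUV := okM hU hV.
case: hU => oU oU2 [K1 HK1]; case: hV => oV oV2 [K2 HK2].
have e : forall w, U w ^+ 2 + (2 * (U w * V w) + V w ^+ 2) = (U w + V w) ^+ 2.
  by move=> w; ring.
have o2 : okf PP (fun w => (U w + V w) ^+ 2).
  by apply: (okf_ext e); apply: okD => //; apply: okD => //; apply: okZ.
split => //; first exact: okD.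
exists (2 * K1 + 2 * K2) => P PPP.
have o3 : okf PP (fun w => 2 * U w ^+ 2 + 2 * V w ^+ 2) by apply: okD; apply: okZ.
apply: (le_trans (eP_le o2 o3 PPP _)).
  move=> w; have := sqr_ge0 (U w - V w); rewrite !expr2; nra.
rewrite (eP_D (okZ 2 oU2) (okZ 2 oV2) PPP) (eP_Z 2 oU2 PPP) (eP_Z 2 oV2 PPP).
have := HK1 P PPP; have := HK2 P PPP; lra.
Qed.

Lemma HypZ k U : Hyp U -> Hyp (fun w => k * U w).
Proof.
case=> oU oU2 [K HK].
have e : forall w, k ^+ 2 * U w ^+ 2 = (k * U w) ^+ 2 by move=> w; ring.
split; first exact: okZ.
  by apply: (okf_ext e); apply: okZ.
exists (k ^+ 2 * K) => P PPP.
rewrite -(eP_ext P e) (eP_Z _ oU2 PPP); apply: ler_wpM2l; [exact: sqr_ge0 | exact: HK].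
Qed.

Lemma HypC c : Hyp (fun _ => c).
Proof.
split; [exact: okC | exact: okC |].
by exists (c ^+ 2) => P _; rewrite eP_C.
Qed.

Lemma eP_N (P : probability T R) U : okf PP U -> PP P -> eP P (fun w => - U w) = - eP P U.
Proof.
move=> oU PPP; rewrite (@eP_ext P _ (fun w => (-1) * U w)); last by move=> w; ring.
by rewrite (eP_Z _ oU PPP) mulN1r.
Qed.

Lemma eP_bound U : Hyp U -> exists M, forall P : probability T R, PP P -> eP P U <= M /\ - eP P U <= M.
Proof.
case=> oU oU2 [K HK]; exists (1 + K) => P PPP.
have o1 : okf PP (fun w => 1 + U w ^+ 2) by apply: okD => //; apply: okC.
have h : eP P (fun w => 1 + U w ^+ 2) <= 1 + K.
  by rewrite (eP_D (okC PP 1) oU2 PPP) eP_C lerD2l; exact: HK.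
split.
  apply: le_trans h; apply: (eP_le oU o1 PPP) => w.
  have := sqr_ge0 (U w - 1); rewrite !expr2; nra.
rewrite -(eP_N oU PPP); apply: le_trans h.
apply: (eP_le (okf_ext (fun w => mulN1r (U w)) (okZ (-1) oU)) o1 PPP) => w. have := sqr_ge0 (U w + 1); rewrite !expr2; nra.
Qed.

Lemma EhatE g : okf PP g -> Ehat PP g = ereal_sup [set (eP P g)%:E | P in PP].
Proof. move=> og; rewrite /Ehat. congr ereal_sup; apply: eq_imagel => P PPP; exact: (ieE og PPP). Qed.

Lemma mu_upE U : okf PP U -> mu_up PP U = supc PP (fun P => eP P U).
Proof. by move=> oU; rewrite /mu_up EhatE. Qed.

Lemma mu_loE U : okf PP U -> mu_lo PP U = infc PP (fun P => eP P U).
Proof.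
move=> oU; rewrite /mu_lo /infc EhatE; last first.
  exact: (okf_ext (fun w => mulN1r (U w)) (okZ (-1) oU)).
congr (- _)%E; congr ereal_sup; apply: eq_imagel => P PPP; by rewrite eP_N.
Qed.

Lemma MintE U : okf PP U -> Mint PP U = Mc PP (fun P => eP P U).
Proof. by move=> oU; rewrite /Mint /Mc mu_loE // mu_upE. Qed.

Lemma cov_upE U V : PP !=set0 -> Hyp U -> Hyp V ->
  cov_up PP U V = Wc PP (fun P => eP P U) (fun P => eP P V) (fun P => eP P (fun w => U w * V w)).
Proof.
move=> PPn hU hV; have [M HM] := eP_bound hU.
rewrite -(Vc_eq _ _ PPn HM) /cov_up /Vc.
have oUV := okM hU hV.
have oU : okf PP U by case: hU. have oV : okf PP V by case: hV.
rewrite (MintE oU) (MintE oV); congr ereal_sup; apply: eq_imagel => m2 _.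
congr ereal_inf; apply: eq_imagel => m1 _.
have e : forall w, U w * V w + ((- m1) * V w + ((- m2) * U w + m1 * m2)) = (U w - m1) * (V w - m2).
  by move=> w; ring.
have og : okf PP (fun w => (U w - m1) * (V w - m2)).
  apply: (okf_ext e); apply: okD => //; apply: okD; first exact: okZ.
  by apply: okD; [exact: okZ | exact: okC].
rewrite EhatE // /Fc; congr ereal_sup; apply: eq_imagel => P PPP; congr EFin.
have o1 := okZ (- m1) oV; have o2 := okZ (- m2) oU; have o3 := okC PP (m1 * m2).
rewrite -(eP_ext P e) (eP_D oUV (okD o1 (okD o2 o3)) PPP).
rewrite (eP_D o1 (okD o2 o3) PPP) (eP_D o2 o3 PPP).
rewrite (eP_Z _ oV PPP) (eP_Z _ oU PPP) eP_C /hF; ring.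
Qed.

End Bridge.

Lemma Wc_ext (R : realType) (I : Type) (S : set I) (x y s x' y' s' : I -> R) :
  (forall i, S i -> [/\ x i = x' i, y i = y' i & s i = s' i]) ->
  Wc S x y s = Wc S x' y' s'.
Proof.
move=> h; rewrite /Wc; congr ereal_sup; apply: eq_imagel => t [S1 [S2 _]].
rewrite /Phi; case: (h _ S1) => -> -> ->; case: (h _ S2) => -> -> -> //.
Qed.

Section Pure.
Context {d : measure_display} {T : measurableType d} {R : realType}.
Variable PP : set (probability T R).

Lemma img_MintN (A : Type) (U : T -> R) (f : R -> A) :
  [set f m | m in Mint PP (fun w => - U w)] = [set f (- m) | m in Mint PP U].
Proof.
have eU : (fun w => - - U w) = U by apply/funext => w; rewrite opprK.
have key : forall m, Mint PP (fun w => - U w) m <-> Mint PP U (- m).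
  move=> m; rewrite /Mint /mu_lo /mu_up /= eU EFinN; split.
    by case=> h1 h2; split; [rewrite leeN2 | rewrite leeNl].
  by case=> h1 h2; split; [rewrite leeNl | rewrite -leeN2].
apply/seteqP; split => _ [m hm <-].
  by exists (- m); [apply/key | rewrite opprK].
by exists (- m) => //; apply/key; rewrite opprK.
Qed.

Lemma cov_lo_N1 (U V : T -> R) : cov_lo PP U V = (- cov_up PP (fun w => (- U w)%R) V)%E.
Proof.
rewrite /cov_lo /cov_up /ereal_inf; congr (- _)%E; congr ereal_sup.
rewrite image_comp; apply: eq_imagel => m2 _ /=.
congr (- _)%E; congr ereal_sup.
rewrite image_comp img_MintN; apply: eq_imagel => m1 _ /=.
congr (- _)%E; congr (Ehat PP); apply/funext => w; ring.
Qed.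

Lemma cov_lo_N2 (U V : T -> R) : cov_lo PP U V = (- cov_up PP U (fun w => (- V w)%R))%E.
Proof.
rewrite /cov_lo /cov_up /ereal_inf; congr (- _)%E.
rewrite img_MintN image_comp; congr ereal_sup; apply: eq_imagel => m2 _ /=.
congr (- _)%E; congr ereal_sup.
rewrite image_comp; apply: eq_imagel => m1 _ /=.
congr (- _)%E; congr (Ehat PP); apply/funext => w; ring.
Qed.

End Pure.

Section Props.
Context {d : measure_display} {T : measurableType d} {R : realType}.
Variable PP : set (probability T R).
Hypothesis PPn : PP !=set0.

Lemma cov_up_sym U V : Hyp PP U -> Hyp PP V -> cov_up PP U V = cov_up PP V U.
Proof.
move=> hU hV; rewrite !cov_upE // Wc_sym; congr Wc.
by apply/funext => P; apply: eP_ext => w; rewrite mulrC.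
Qed.

Lemma cov_up_shift U V a b : Hyp PP U -> Hyp PP V ->
  cov_up PP (fun w => U w + a) (fun w => V w + b) = cov_up PP U V.
Proof.
move=> hU hV.
have hUa : Hyp PP (fun w => U w + a) := HypD hU (HypC PP a).
have hVb : Hyp PP (fun w => V w + b) := HypD hV (HypC PP b).
have oU : okf PP U by case: hU. have oV : okf PP V by case: hV.
have oUV := okM hU hV.
rewrite !cov_upE // -[in RHS](Wc_shift _ _ _ _ a b); apply: Wc_ext => P PPP; split.
- by rewrite (eP_D oU (okC PP a) PPP) eP_C.
- by rewrite (eP_D oV (okC PP b) PPP) eP_C.
- have e : forall w, U w * V w + (a * V w + (b * U w + a * b)) = (U w + a) * (V w + b).
    by move=> w; ring.
  have o1 := okZ a oV; have o2 := okZ b oU; have o3 := okC PP (a * b).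
  rewrite -(eP_ext P e) (eP_D oUV (okD o1 (okD o2 o3)) PPP).
  rewrite (eP_D o1 (okD o2 o3) PPP) (eP_D o2 o3 PPP).
  rewrite (eP_Z _ oV PPP) (eP_Z _ oU PPP) eP_C; ring.
Qed.

Lemma cov_up_add U1 U2 V : Hyp PP U1 -> Hyp PP U2 -> Hyp PP V ->
  (cov_up PP (fun w => (U1 w + U2 w)%R) V <= cov_up PP U1 V + cov_up PP U2 V)%E.
Proof.
move=> h1 h2 hV.
have o1 : okf PP U1 by case: h1. have o2 : okf PP U2 by case: h2.
have o1V := okM h1 hV; have o2V := okM h2 hV.
rewrite !cov_upE //; last exact: HypD.
rewrite (Wc_ext (x' := fun P => eP P U1 + eP P U2) (y' := fun P => eP P V)
   (s' := fun P => eP P (fun w => U1 w * V w) + eP P (fun w => U2 w * V w))).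
  exact: Wc_add.
move=> P PPP; split => //; first exact: (eP_D o1 o2 PPP).
rewrite -(eP_D o1V o2V PPP); apply: eP_ext => w; ring.
Qed.

Lemma cov_up_scale U V a b : Hyp PP U -> Hyp PP V -> 0 <= a * b ->
  cov_up PP (fun w => a * U w) (fun w => b * V w) = ((a * b)%:E * cov_up PP U V)%E.
Proof.
move=> hU hV ab.
have oU : okf PP U by case: hU. have oV : okf PP V by case: hV.
have oUV := okM hU hV.
rewrite !cov_upE //; try exact: HypZ.
rewrite -Wc_scale //; apply: Wc_ext => P PPP; split.
- exact: (eP_Z _ oU PPP).
- exact: (eP_Z _ oV PPP).
- rewrite -(eP_Z _ oUV PPP); apply: eP_ext => w; ring.
Qed.

End Props.

Lemma Hyp_of {d : measure_display} {T : measurableType d} {R : realType}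
  (PP : set (probability T R)) (U : T -> R) :
  PP !=set0 -> measurable_fun setT U -> (Ehat PP (fun w => (U w ^+ 2)%R) < +oo)%E -> Hyp PP U.
Proof.
move=> [P0 PP0] mU hE.
have mU2 : measurable_fun setT (fun w => U w ^+ 2) by exact: measurable_realfun.measurable_funX.
have le_int : forall P, PP P -> (\int[P]_x (U x ^+ 2)%:E <= Ehat PP (fun w => (U w ^+ 2)%R))%E.
  by move=> P PPP; apply: ereal_sup_ubound; exists P.
have ge0 : forall P : probability T R, (0 <= \int[P]_x (U x ^+ 2)%:E)%E.
  by move=> P; apply: integral_ge0 => w _; rewrite lee_fin sqr_ge0.
have o2 : okf PP (fun w => U w ^+ 2).
  split => // P PPP; apply/integrableP; split.
    exact/measurable_realfun.measurable_EFinP.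
  rewrite (_ : (fun x => `|(EFin \o (fun w : T => (U w ^+ 2)%R)) x|%E) = (fun x => (U x ^+ 2)%:E)); last first.
    apply/funext => x; change ((`|(U x ^+ 2)%:E| = (U x ^+ 2)%:E)%E).
    by rewrite abse_EFin ger0_norm // sqr_ge0.
  exact: le_lt_trans (le_int P PPP) hE.
have oU : okf PP U.
  apply: (ok_dom mU (okD (okC PP 1) o2)) => w.
  rewrite ler_norml; apply/andP; split.
    by have := sqr_ge0 (U w + 1); rewrite !expr2; nra.
  by have := sqr_ge0 (U w - 1); rewrite !expr2; nra.
split => //.
have fE : Ehat PP (fun w => U w ^+ 2) \is a fin_num.
  rewrite fin_numE; apply/andP; split.
    by apply/eqP => h; have := le_trans (ge0 P0) (le_int P0 PP0); rewrite h.
  by rewrite lt_eqF.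
exists (fine (Ehat PP (fun w => U w ^+ 2))) => P PPP.
have := le_int P PPP; rewrite (ieE o2 PPP) -[X in (_ <= X)%E](fineK fE) lee_fin; exact.
Qed.

Theorem proposition3p7 (d : measure_display) (T : measurableType d) (R : realType)
  (PP : set (probability T R)) (PPne : PP !=set0)
  (X Y Z : T -> R)
  (mX : measurable_fun setT X) (mY : measurable_fun setT Y)
  (mZ : measurable_fun setT Z)
  (Hfin : (Ehat PP (fun w => (X w ^+ 2)%R) + Ehat PP (fun w => (Y w ^+ 2)%R)
           + Ehat PP (fun w => (Z w ^+ 2)%R) < +oo)%E) :
  (* (1) *)
  (cov_up PP X Y = cov_up PP Y X /\ cov_lo PP X Y = cov_lo PP Y X) /\
  (* (2) *)
  (forall a b : R,
     cov_up PP (fun w => X w + a) (fun w => Y w + b) = cov_up PP X Y /\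
     cov_lo PP (fun w => X w + a) (fun w => Y w + b) = cov_lo PP X Y) /\
  (* (3) *)
  (cov_up PP (fun w => (X w + Y w)%R) Z <= cov_up PP X Z + cov_up PP Y Z)%E /\
  (* (4) *)
  (cov_lo PP X Z + cov_lo PP Y Z <= cov_lo PP (fun w => (X w + Y w)%R) Z)%E /\
  (* (5) *)
  (forall a b : R, 0 <= a * b ->
     cov_up PP (fun w => a * X w) (fun w => b * Y w) = ((a * b)%:E * cov_up PP X Y)%E /\
     cov_lo PP (fun w => a * X w) (fun w => b * Y w) = ((a * b)%:E * cov_lo PP X Y)%E) /\
  (* (6) *)
  (forall a b : R, a * b <= 0 ->
     cov_up PP (fun w => a * X w) (fun w => b * Y w) = ((a * b)%:E * cov_lo PP X Y)%E) /\
  cov_lo PP X Y = (- cov_up PP (fun w => (- X w)%R) Y)%E /\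
  cov_lo PP X Y = (- cov_up PP X (fun w => (- Y w)%R))%E.
Proof.
have [P0 PP0] := PPne.
have ge0 : forall U : T -> R, (0 <= Ehat PP (fun w => (U w ^+ 2)%R))%E.
  move=> U; apply: le_trans (ereal_sup_ubound _); last by exists P0.
  by apply: integral_ge0 => w _; rewrite lee_fin sqr_ge0.
have hX : Hyp PP X.
  apply: Hyp_of => //; apply: le_lt_trans Hfin.
  by rewrite -addeA; apply: leeDl; apply: adde_ge0.
have hY : Hyp PP Y.
  apply: Hyp_of => //; apply: le_lt_trans Hfin.
  by rewrite addeAC; apply: leeDr; apply: adde_ge0.
have hZ : Hyp PP Z.
  apply: Hyp_of => //; apply: le_lt_trans Hfin.
  by apply: leeDr; apply: adde_ge0.
have hN : forall U, Hyp PP U -> Hyp PP (fun w => - U w).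
  by move=> U hU; apply: (Hyp_ext (fun w => mulN1r (U w))); apply: HypZ.
have hXN := hN _ hX; have hYN := hN _ hY.
have scale : forall U V (a b : R), Hyp PP U -> Hyp PP V -> 0 <= a * b ->
    cov_up PP (fun w => a * U w) (fun w => b * V w) = ((a * b)%:E * cov_up PP U V)%E /\
    cov_lo PP (fun w => a * U w) (fun w => b * V w) = ((a * b)%:E * cov_lo PP U V)%E.
  move=> U V a b hU hV ab; split; first exact: cov_up_scale.
  rewrite !cov_lo_N1 muleN; congr (- _)%E.
  have -> : (fun w => (- (a * U w))%R) = (fun w => a * (- U w)) by apply/funext => w; ring.
  exact: (cov_up_scale PPne (hN _ hU) hV ab).
split.
  split; first exact: cov_up_sym.
  by rewrite cov_lo_N1 cov_lo_N2 cov_up_sym.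
split.
  move=> a b; split; first exact: cov_up_shift.
  rewrite !cov_lo_N1.
  have -> : (fun w => (- (X w + a))%R) = (fun w => (- X w) + (- a)) by apply/funext => w; ring.
  by rewrite (cov_up_shift PPne (-a) b hXN hY).
split; first exact: cov_up_add.
split.
  rewrite !cov_lo_N1.
  have ninf : forall U V, Hyp PP U -> Hyp PP V -> (-oo < cov_up PP U V)%E.
    by move=> U V hU hV; rewrite cov_upE //; apply: Wc_ninf.
  have hA := ninf _ _ hXN hZ; have hB := ninf _ _ hYN hZ.
  have def : (cov_up PP (fun w => (- X w)%R) Z +? cov_up PP (fun w => (- Y w)%R) Z)%E.
    by move: hA hB; case: (cov_up _ _ _) => [?| |]; case: (cov_up _ _ _) => [?| |].
  rewrite -oppeD // leeN2.
  have -> : (fun w => (- (X w + Y w))%R) = (fun w => (- X w) + (- Y w))%R.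
    by apply/funext => w; ring.
  exact: cov_up_add.
split; first by move=> a b ab; exact: scale.
split.
  move=> a b ab.
  have -> : (fun w => a * X w) = (fun w => (- a) * (- X w)).
    by apply/funext => w; ring.
  have ab' : 0 <= - a * b by rewrite mulNr oppr_ge0.
  rewrite (scale _ _ (- a) b hXN hY ab').1.
  by rewrite cov_lo_N1 mulNr EFinN mulNe muleN.
split; first exact: cov_lo_N1.
exact: cov_lo_N2.
Qed.
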